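(* Let $\Delta$ be a local derivation of $\mathcal{S}$ with $\Delta(G_0)=\Delta(G_1)=0$. Then $\Delta(G_m)=0$ for all $m\in\mathbb{Z}$.
   Context: $\mathcal{S}$ is the centerless super Virasoro algebra: the Lie superalgebra over $\mathbb{C}$ with basis $\{L_m,G_n: m,n\in\mathbb{Z}\}$, $L_m$ even, $G_n$ odd, and brackets $[L_m,L_n]=(m-n)L_{m+n}$, $[L_m,G_r]=(\frac m2-r)G_{m+r}$, $[G_r,G_s]=2L_{r+s}$. A homogeneous linear map $D$ of parity $|D|$ is a derivation if $D([x,y])=[D(x),y]+(-1)^{|D||x|}[x,D(y)]$ for homogeneous $x,y$; derivations are sums of even and odd ones. A linear map $\Delta:\mathcal{S}\to\mathcal{S}$ is a local derivation if for every $x$ there is a derivation $D_x$ with $\Delta(x)=D_x(x)$. *)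

(* Defs.v *)
From HB Require Import structures.
From mathcomp Require Import all_boot all_order all_algebra.
From mathcomp Require Import finmap.
From mathcomp.multinomials Require Import monalg.
Set Implicit Arguments. Unset Strict Implicit. Unset Printing Implicit Defensive.
Import Order.TTheory GRing.Theory Num.Theory.
Local Open Scope ring_scope.

(* Index set of the basis: inl m stands for L_m (even), inr n for G_n (odd). *)
Definition sv_idx := (int + int)%type.

Definition idx_parity (a : sv_idx) : bool :=
  match a with inl _ => false | inr _ => true end.

Section SuperVirasoro.
Variable C : numClosedFieldType.

(* The centerless super Virasoro algebra S as a C-vector space:
   finitely supported C-linear combinations of the basis indices. *)
Definition SV := {malg C[sv_idx]}.

Definition Lb (m : int) : SV := << inl m >>.
Definition Gb (n : int) : SV := << inr n >>.

Definition sv_brb (a b : sv_idx) : SV :=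
  match a, b with
  | inl m, inl n => (m - n)%:~R *: Lb (m + n)
  | inl m, inr r => (m%:~R / 2 - r%:~R) *: Gb (m + r)
  | inr r, inl m => - (m%:~R / 2 - r%:~R) *: Gb (m + r)
  | inr r, inr s => 2 *: Lb (r + s)
  end.

Definition sv_br (x y : SV) : SV :=
  \sum_(a <- msupp x) \sum_(b <- msupp y) (x@_a * y@_b) *: sv_brb a b.

Definition homog (p : bool) (x : SV) : Prop :=
  forall a, a \in msupp x -> idx_parity a = p.

Definition derivation_of_parity (p : bool) (D : SV -> SV) : Prop :=
  [/\ linear D,
      (forall q x, homog q x -> homog (addb q p) (D x)) &
      (forall q r x y, homog q x -> homog r y ->
         D (sv_br x y) = sv_br (D x) y + (-1) ^+ (p && q) *: sv_br x (D y))].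

Definition derivation (D : SV -> SV) : Prop :=
  exists D0 D1, [/\ derivation_of_parity false D0,
                    derivation_of_parity true D1 &
                    forall x, D x = D0 x + D1 x].

Definition local_derivation (Delta : SV -> SV) : Prop :=
  linear Delta /\ forall x, exists D, derivation D /\ Delta x = D x.

End SuperVirasoro.

(* Main.v *)
Require Import Defs.
From HB Require Import structures.
From mathcomp Require Import all_boot all_order all_algebra.
From mathcomp Require Import finmap.
From mathcomp.multinomials Require Import monalg.
From mathcomp.algebra_tactics Require Import ring.
From mathcomp Require Import zify.
Set Implicit Arguments. Unset Strict Implicit. Unset Printing Implicit Defensive.
Import GRing.Theory Num.Theory.
Local Open Scope ring_scope.



Section P.
Variable C : numClosedFieldType.
Local Notation SV := (SV C).

Definition ev (phi : sv_idx -> C) (v : SV) : C :=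
  \sum_(a <- msupp v) v@_a * phi a.

Lemma evE phi v : ev phi v = mmap idfun phi v.
Proof. by []. Qed.

Lemma evD phi x y : ev phi (x + y) = ev phi x + ev phi y.
Proof. by rewrite !evE mmapD. Qed.

Lemma ev0 phi : ev phi 0 = 0.
Proof. by rewrite evE mmap0. Qed.

Lemma evZ phi c v : ev phi (c *: v) = c * ev phi v.
Proof.
rewrite evE (mmapEw (msuppZ_le c v)) /= /ev big_distrr /=.
by apply: eq_bigr => a _; rewrite mcoeffZ mulrA.
Qed.

Lemma ev_sum phi (I : Type) (s : seq I) (F : I -> SV) :
  ev phi (\sum_(i <- s) F i) = \sum_(i <- s) ev phi (F i).
Proof.
elim: s => [|x s IH]; first by rewrite !big_nil ev0.
by rewrite !big_cons evD IH.
Qed.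

Lemma evU phi a : ev phi << a >> = phi a.
Proof. by rewrite evE mmapU /= mul1r. Qed.

Lemma ev_ext phi psi v : phi =1 psi -> ev phi v = ev psi v.
Proof. by move=> e; apply: eq_bigr => a _; rewrite e. Qed.

Lemma ev_addf f g v : ev (fun a => f a + g a) v = ev f v + ev g v.
Proof. by rewrite /ev -big_split /=; apply: eq_bigr => a _; rewrite mulrDr. Qed.

Lemma ev_subf f g v : ev (fun a => f a - g a) v = ev f v - ev g v.
Proof.
rewrite /ev -sumrB /=; apply: eq_bigr => a _; by rewrite mulrBr.
Qed.

Lemma ev_scalef c f v : ev (fun a => c * f a) v = c * ev f v.
Proof.
by rewrite /ev big_distrr /=; apply: eq_bigr => a _; rewrite mulrCA.
Qed.

Lemma sum_single (F : sv_idx -> C) (v : SV) a0 : a0 \in msupp v ->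
  (forall a, a \in msupp v -> a != a0 -> F a = 0) ->
  \sum_(a <- msupp v) F a = F a0.
Proof.
move=> a0in H; rewrite (bigD1_seq a0) //= ?fset_uniq //.
rewrite big_seq_cond big1 ?addr0 // => a /andP[ain ne]; exact: H.
Qed.

Definition dlt (b : sv_idx) (a : sv_idx) : C := (a == b)%:R.

Lemma ev_dlt b v : ev (dlt b) v = v@_b.
Proof.
have [bin|bnin] := boolP (b \in msupp v).
  rewrite /ev (@sum_single _ v b) // ?/dlt ?eqxx ?mulr1 // => a _ ne.
  by rewrite (negbTE ne) mulr0.
rewrite mcoeff_outdom // /ev big_seq big1 // => a ain.
rewrite /dlt; case: eqP => [e|_]; last by rewrite mulr0.
by move: ain; rewrite e (negbTE bnin).
Qed.

Definition lin (F : sv_idx -> SV) (v : SV) : SV :=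
  \sum_(a <- msupp v) v@_a *: F a.

Lemma linw F v (d : {fset sv_idx}) : (msupp v `<=` d)%fset ->
  lin F v = \sum_(a <- d) v@_a *: F a.
Proof.
move=> le; rewrite /lin (big_fset_incl _ le) // => a _ /mcoeff_outdom ->.
by rewrite scale0r.
Qed.

Lemma linD F x y : lin F (x + y) = lin F x + lin F y.
Proof.
rewrite (@linw _ _ (msupp x `|` msupp y)%fset) ?msuppD_le //.
rewrite (@linw _ x (msupp x `|` msupp y)%fset) ?fsubsetUl //.
rewrite (@linw _ y (msupp x `|` msupp y)%fset) ?fsubsetUr //.
by rewrite -big_split /=; apply: eq_bigr => a _; rewrite mcoeffD scalerDl.
Qed.

Lemma ev_lin phi F v : ev phi (lin F v) = ev (fun a => ev phi (F a)) v.
Proof. by rewrite /lin ev_sum; apply: eq_bigr => a _; rewrite evZ. Qed.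

Lemma msuppU1' a : msupp (<< a >> : SV) = [fset a]%fset.
Proof. by rewrite msuppU oner_eq0. Qed.

Lemma sv_br_r v k : sv_br v (Gb C k) = lin (fun a => sv_brb C a (inr k)) v.
Proof.
rewrite /sv_br /lin /Gb msuppU1'; apply: eq_bigr => a _.
by rewrite big_seq_fset1 mcoeffUU mulr1.
Qed.

Lemma sv_br_l j v : sv_br (Lb C j) v = lin (fun b => sv_brb C (inl j) b) v.
Proof.
rewrite /sv_br /lin /Lb msuppU1' big_seq_fset1 mcoeffUU.
by apply: eq_bigr => b _; rewrite mul1r.
Qed.

Lemma sv_brUU j k : sv_br (Lb C j) (Gb C k) = sv_brb C (inl j) (inr k).
Proof. by rewrite sv_br_l /lin /Gb msuppU1' big_seq_fset1 mcoeffUU scale1r. Qed.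


Definition brc (a b : sv_idx) : C :=
  match a, b with
  | inl m, inl n => (m - n)%:~R
  | inl m, inr r => m%:~R / 2 - r%:~R
  | inr r, inl m => - (m%:~R / 2 - r%:~R)
  | inr r, inr s => 2
  end.
Definition bri (a b : sv_idx) : sv_idx :=
  match a, b with
  | inl m, inl n => inl (m + n)
  | inl m, inr r => inr (m + r)
  | inr r, inl m => inr (m + r)
  | inr r, inr s => inl (r + s)
  end.

Lemma brbE a b : sv_brb C a b = brc a b *: << bri a b >>.
Proof. by case: a; case: b. Qed.

Lemma ev_brb phi a b : ev phi (sv_brb C a b) = brc a b * phi (bri a b).
Proof. by rewrite brbE evZ evU. Qed.

Lemma inl_eq (x y : int) : (inl x == inl y :> sv_idx) = (x == y).
Proof. by []. Qed.
Lemma inr_eq (x y : int) : (inr x == inr y :> sv_idx) = (x == y).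
Proof. by []. Qed.
Lemma inlr_eq (x y : int) : (inl x == inr y :> sv_idx) = false.
Proof. by []. Qed.
Lemma inrl_eq (x y : int) : (inr x == inl y :> sv_idx) = false.
Proof. by []. Qed.
Lemma addeq (i k n : int) : (i + k == n) = (i == n - k).
Proof. by rewrite [i == _]eq_sym subr_eq eq_sym. Qed.
Lemma addeq' (i k n : int) : (k + i == n) = (i == n - k).
Proof. by rewrite addrC addeq. Qed.

Definition eqE := (inl_eq, inr_eq, inlr_eq, inrl_eq).

Ltac prep := rewrite -ev_dlt ?sv_br_r ?sv_br_l ev_lin -ev_dlt -ev_scalef;
  apply: ev_ext => -[i|i]; rewrite ev_brb /dlt; simpl brc; simpl bri.

Ltac kill := do 2 (case: eqP => [?|_]; [discriminate|]); by rewrite !mulr0.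

Lemma coefR_L v k n : (sv_br v (Gb C k))@_(inl n) = 2 * v@_(inr (n - k)).
Proof.
prep; first by rewrite inrl_eq inlr_eq !mulr0.
by rewrite inl_eq inr_eq addeq.
Qed.

Lemma coefR_G v k n :
  (sv_br v (Gb C k))@_(inr n) = ((n - k)%:~R / 2 - k%:~R) * v@_(inl (n - k)).
Proof.
prep; last by rewrite inlr_eq inrl_eq !mulr0.
rewrite inl_eq inr_eq addeq; case: eqP => [->|_]; by rewrite ?mulr0.
Qed.

Lemma coefL_L j v n :
  (sv_br (Lb C j) v)@_(inl n) = (j - (n - j))%:~R * v@_(inl (n - j)).
Proof.
prep; last by kill.
rewrite !inl_eq addeq'; case: eqP => [->|_]; by rewrite ?mulr0.
Qed.

Lemma coefL_G j v n :
  (sv_br (Lb C j) v)@_(inr n) = (j%:~R / 2 - (n - j)%:~R) * v@_(inr (n - j)).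
Proof.
prep; first by kill.
rewrite !inr_eq addeq'; case: eqP => [->|_]; by rewrite ?mulr0.
Qed.

Lemma brG_D x y k : sv_br (x + y) (Gb C k) = sv_br x (Gb C k) + sv_br y (Gb C k).
Proof. by rewrite !sv_br_r linD. Qed.
Lemma brL_D j x y : sv_br (Lb C j) (x + y) = sv_br (Lb C j) x + sv_br (Lb C j) y.
Proof. by rewrite !sv_br_l linD. Qed.

Lemma der_props (D : SV -> SV) : derivation D ->
  (forall a x y, D (a *: x + y) = a *: D x + D y) /\
  (forall j k, D (sv_br (Lb C j) (Gb C k)) =
     sv_br (D (Lb C j)) (Gb C k) + sv_br (Lb C j) (D (Gb C k))).
Proof.
case=> D0 [D1 [[l0 _ L0] [l1 _ L1] eD]]; split.
  by move=> a x y; rewrite !eD l0 l1 scalerDr addrACA.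
move=> j k.
have hL : homog false (Lb C j).
  by move=> a; rewrite /Lb msuppU1' inE => /eqP ->.
have hG : homog true (Gb C k).
  by move=> a; rewrite /Gb msuppU1' inE => /eqP ->.
rewrite eD (L0 _ _ _ _ hL hG) (L1 _ _ _ _ hL hG) !andbF expr0 !scale1r !eD.
by rewrite brG_D brL_D addrACA.
Qed.

End P.



Section Der.
Variable C : numClosedFieldType.
Local Notation SV := (SV C).
Variable D : SV -> SV.
Hypothesis hl : forall a x y, D (a *: x + y) = a *: D x + D y.
Hypothesis hb : forall j k, D (sv_br (Lb C j) (Gb C k)) =
     sv_br (D (Lb C j)) (Gb C k) + sv_br (Lb C j) (D (Gb C k)).

Lemma D0 : D 0 = 0.
Proof.
have := hl 1 0 0; rewrite !scale1r add0r => e.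
by apply: (@addrI _ (D 0)); rewrite addr0 -e.
Qed.

Lemma DZ a x : D (a *: x) = a *: D x.
Proof. by have := hl a x 0; rewrite addr0 D0 addr0. Qed.

Lemma DD x y : D (x + y) = D x + D y.
Proof. by have := hl 1 x y; rewrite !scale1r. Qed.

Lemma Leib j k : (j%:~R / 2 - k%:~R) *: D (Gb C (j + k)) =
  sv_br (D (Lb C j)) (Gb C k) + sv_br (Lb C j) (D (Gb C k)).
Proof. by rewrite -DZ -hb sv_brUU. Qed.

Lemma EqL j k n : (j%:~R / 2 - k%:~R) * (D (Gb C (j + k)))@_(inl n) =
  2 * (D (Lb C j))@_(inr (n - k)) + (j - (n - j))%:~R * (D (Gb C k))@_(inl (n - j)).
Proof. by rewrite -mcoeffZ Leib mcoeffD coefR_L coefL_L. Qed.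

Lemma EqG j k n : (j%:~R / 2 - k%:~R) * (D (Gb C (j + k)))@_(inr n) =
  ((n - k)%:~R / 2 - k%:~R) * (D (Lb C j))@_(inl (n - k)) +
  (j%:~R / 2 - (n - j)%:~R) * (D (Gb C k))@_(inr (n - j)).
Proof. by rewrite -mcoeffZ Leib mcoeffD coefR_G coefL_G. Qed.

Definition cc k := (D (Gb C k))@_(inl k).
Definition dd k := (D (Gb C k))@_(inr k).

Lemma intr1C : (1:int)%:~R = 1 :> C. Proof. by []. Qed.
Lemma intr0C : (0:int)%:~R = 0 :> C. Proof. by []. Qed.
Lemma two_neq0 : (2 : C) != 0. Proof. by rewrite pnatr_eq0. Qed.
Lemma five_neq0 : (5 : C) != 0. Proof. by rewrite pnatr_eq0. Qed.

Lemma Rc k : (1 / 2 - k%:~R) * cc (k + 1) =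
   2 * (D (Lb C 1))@_(inr 1) + (1 - k%:~R) * cc k.
Proof.
have := EqL 1 k (k + 1).
rewrite (addrC 1 k) (_ : k + 1 - k = 1); last by ring.
rewrite (_ : k + 1 - 1 = k); last by ring.
by rewrite /cc intrB intr1C.
Qed.

Lemma Rc' k : (- 1 / 2 - (k%:~R + 1)) * cc k =
   2 * (D (Lb C (-1)))@_(inr (-1)) + (- 1 - (k%:~R + 1)) * cc (k + 1).
Proof.
have := EqL (-1) (k + 1) k.
rewrite (_ : -1 + (k + 1) = k); last by ring.
rewrite (_ : k - (k + 1) = -1); last by ring.
rewrite (_ : k - -1 = k + 1); last by ring.
by rewrite /cc !intrB !intrD intrN intr1C.
Qed.

Lemma c5_alg (c1 c0 P Q K : C) : (1/2 - K)*c1 = 2 * P + (1-K) * c0 ->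
  (-1/2 - (K+1))* c0 = 2 * Q + (-1-(K+1)) * c1 -> 5*(c1-c0) = 4*(P+Q).
Proof.
move=> e1 e2.
have h2 := two_neq0.
apply/eqP; rewrite -subr_eq0.
have -> : 5 * (c1 - c0) - 4 * (P + Q) =
  2 * (((1 / 2 - K) * c1 - (2 * P + (1 - K) * c0)) +
       ((-1 / 2 - (K + 1)) * c0 - (2 * Q + (-1 - (K + 1)) * c1))).
  by field.
by rewrite e1 e2 !subrr addr0 mulr0.
Qed.

Lemma c5 k : 5 * (cc (k + 1) - cc k) =
  4 * ((D (Lb C 1))@_(inr 1) + (D (Lb C (-1)))@_(inr (-1))).
Proof. exact: c5_alg (Rc k) (Rc' k). Qed.

Lemma cstep k : cc (k + 1) - cc k = cc 1 - cc 0.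
Proof.
apply: (mulfI five_neq0).
by rewrite c5 -(c5 0) add0r.
Qed.

Lemma int_affine (f : int -> C) g : (forall k, f (k + 1) - f k = g) ->
  forall k, f k = f 0 + k%:~R * g.
Proof.
move=> H.
have Hn : forall (n : nat) k, f (k + n%:Z) = f k + n%:R * g.
  elim=> [|n IH] k; first by rewrite addr0 mul0r addr0.
  rewrite -addn1 PoszD addrA.
  have := H (k + n%:Z); move/eqP; rewrite subr_eq => /eqP ->.
  rewrite IH natrD mulrDl mul1r.
  by rewrite addrC -addrA.
case=> n; first by have := Hn n 0; rewrite !add0r.
have := Hn n.+1 (Negz n).
rewrite NegzE addNr => ->.
by rewrite intrN mulNr addrK.
Qed.

Lemma ccE k : cc k = cc 0 + k%:~R * (cc 1 - cc 0).
Proof. exact: (int_affine cstep). Qed.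

Lemma half_neq0 (k : int) : (1 / 2 - k%:~R : C) != 0.
Proof.
apply/eqP => h.
have : ((1 - 2 * k)%:~R : C) = 0.
  rewrite intrB intrM intr1C.
  have -> : (2 : int)%:~R = (2 : C) by [].
  by rewrite -[RHS](mulr0 2) -h mulrBr mul1r divff // two_neq0.
move/eqP; rewrite intr_eq0 => /eqP hh; lia.
Qed.

Lemma Rd k : dd (k + 1) - dd k = (D (Lb C 1))@_(inl 1).
Proof.
have := EqG 1 k (k + 1).
rewrite (addrC 1 k) (_ : k + 1 - k = 1); last by ring.
rewrite (_ : k + 1 - 1 = k); last by ring.
rewrite -/(dd (k + 1)) -/(dd k) intr1C -mulrDr.
move/(mulfI (half_neq0 k)) ->.
by rewrite addrK.
Qed.

Lemma ddE k : dd k = dd 0 + k%:~R * (D (Lb C 1))@_(inl 1).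
Proof. exact: (int_affine Rd). Qed.

End Der.



Section Ev.
Variable C : numClosedFieldType.
Local Notation SV := (SV C).
Variable z : C.
Hypothesis z0 : z != 0.

Definition phiP (par : bool) (a : sv_idx) : C :=
  match a with inl i => if par then 0 else z ^ i | inr i => if par then z ^ i else 0 end.
Definition chiL (k : int) (a : sv_idx) : C :=
  match a with inl n => z ^ n / (n - k)%:~R | inr _ => 0 end.
Definition chiG (k : int) (a : sv_idx) : C :=
  match a with inl _ => 0 | inr n => z ^ n / (n - k)%:~R end.
Definition hL (a : sv_idx) : C :=
  match a with inl _ => 0 | inr i => 2 * (z ^ i / i%:~R) end.
Definition hA (a : sv_idx) : C :=
  match a with inl i => (i%:~R / 2) * (z ^ i / i%:~R) | inr _ => 0 end.
Definition hB (a : sv_idx) : C :=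
  match a with inl i => z ^ i / i%:~R | inr _ => 0 end.

Lemma alg1 (Zi Zk I : C) : 2 * (Zi * Zk / I) = Zk * (2 * (Zi / I)).
Proof. ring. Qed.

Lemma alg2 (Zi I K : C) : I - K != 0 ->
  Zi = (0 / 2 - K) * (Zi / (I - K)) - (0 - I) * (Zi / (I - K)).
Proof. move=> h; have h2 : (2:C) != 0 by rewrite pnatr_eq0. by field. Qed.

Lemma alg3 (Zi I K : C) : I - K != 0 ->
  Zi = (0 / 2 - K) * (Zi / (I - K)) - (0 / 2 - I) * (Zi / (I - K)).
Proof. move=> h; have h2 : (2:C) != 0 by rewrite pnatr_eq0. by field. Qed.

Lemma alg4 (Zi Zk I K : C) :
  (I / 2 - K) * (Zi * Zk / I) = Zk * (I / 2 * (Zi / I) - K * (Zi / I)).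
Proof. ring. Qed.

Variable D : SV -> SV.
Hypothesis hl : forall a x y, D (a *: x + y) = a *: D x + D y.
Hypothesis hb : forall j k, D (sv_br (Lb C j) (Gb C k)) =
     sv_br (D (Lb C j)) (Gb C k) + sv_br (Lb C j) (D (Gb C k)).

Lemma ev_Leib phi k : (0%:~R / 2 - k%:~R) * ev phi (D (Gb C k)) =
  ev (fun a => ev phi (sv_brb C a (inr k))) (D (Lb C 0)) +
  ev (fun b => ev phi (sv_brb C (inl 0) b)) (D (Gb C k)).
Proof.
have E := congr1 (ev phi) (Leib hl hb 0 k).
rewrite (add0r k) evZ evD sv_br_r sv_br_l in E.
rewrite E.
by congr (_ + _); apply: ev_lin.
Qed.

Lemma ev_comb phi (c : C) k b (v : SV) :
  ev (fun a => (c * phi a - ev phi (sv_brb C (inl 0) a)) + z ^ k * dlt C b a) v =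
  c * ev phi v - ev (fun a => ev phi (sv_brb C (inl 0) a)) v + z ^ k * v@_b.
Proof. by rewrite ev_addf ev_subf ev_scalef ev_scalef ev_dlt. Qed.

Lemma evL k : ev (phiP false) (D (Gb C k)) =
  z ^ k * (ev hL (D (Lb C 0)) + cc D k).
Proof.
have f1 : ev (fun a => ev (chiL k) (sv_brb C a (inr k))) (D (Lb C 0)) =
    z ^ k * ev hL (D (Lb C 0)).
  rewrite -ev_scalef; apply: ev_ext => -[i|i]; rewrite ev_brb; simpl brc; simpl bri;
    simpl chiL; simpl hL; first by rewrite !mulr0.
  by rewrite addrK expfzDr // alg1.
have pw : phiP false =1 (fun a => ((0%:~R / 2 - k%:~R) * chiL k a -
    ev (chiL k) (sv_brb C (inl 0) a)) + z ^ k * dlt C (inl k) a).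
  move=> -[i|i]; rewrite ev_brb /dlt; simpl brc; simpl bri; simpl chiL;
    simpl phiP.
    rewrite (add0r i) inl_eq; have [->|ne] := eqVneq i k.
      by rewrite (subrr k) intr0C invr0 !mulr0 subrr add0r mulr1.
    rewrite mulr0 addr0.
    have hik : ((i - k)%:~R : C) != 0 by rewrite intr_eq0 subr_eq0.
    move: hik; rewrite !intrB intr0C => hik.
    exact: alg2.
  rewrite !mulr0 subrr add0r.
  first [done | (case: eqP => [?|_]; [discriminate | by rewrite mulr0])].
rewrite (ev_ext _ pw) ev_comb (ev_Leib (chiL k) k) addrK mulrDr.
by congr (_ + _); try exact: f1.
Qed.

Lemma evG k : ev (phiP true) (D (Gb C k)) =
  z ^ k * (ev hA (D (Lb C 0)) - k%:~R * ev hB (D (Lb C 0)) + dd D k).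
Proof.
have f1 : ev (fun a => ev (chiG k) (sv_brb C a (inr k))) (D (Lb C 0)) =
    z ^ k * (ev hA (D (Lb C 0)) - k%:~R * ev hB (D (Lb C 0))).
  rewrite -[_ * ev hB _]ev_scalef -ev_subf -ev_scalef.
  apply: ev_ext => -[i|i]; rewrite ev_brb; simpl brc; simpl bri;
    simpl chiG; simpl hA; simpl hB; last by rewrite !mulr0 subrr mulr0.
  by rewrite addrK expfzDr // alg4.
have pw : phiP true =1 (fun a => ((0%:~R / 2 - k%:~R) * chiG k a -
    ev (chiG k) (sv_brb C (inl 0) a)) + z ^ k * dlt C (inr k) a).
  move=> -[i|i]; rewrite ev_brb /dlt; simpl brc; simpl bri; simpl chiG;
    simpl phiP.
    rewrite !mulr0 subrr add0r.
    first [done | (case: eqP => [?|_]; [discriminate | by rewrite mulr0])].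
  rewrite (add0r i) inr_eq; have [->|ne] := eqVneq i k.
    by rewrite (subrr k) intr0C invr0 !mulr0 subrr add0r mulr1.
  rewrite mulr0 addr0.
  have hik : ((i - k)%:~R : C) != 0 by rewrite intr_eq0 subr_eq0.
  move: hik; rewrite !intrB intr0C => hik.
  exact: alg3.
rewrite (ev_ext _ pw) ev_comb (ev_Leib (chiG k) k) addrK mulrDr.
by congr (_ + _); try exact: f1.
Qed.

Lemma keyL : exists a g : C, forall k,
  ev (phiP false) (D (Gb C k)) = z ^ k * (a + k%:~R * g).
Proof.
exists (ev hL (D (Lb C 0)) + cc D 0), (cc D 1 - cc D 0) => k.
by rewrite evL (ccE hl hb k) addrA.
Qed.

Lemma alg5 (A K B d0 E : C) : A - K * B + (d0 + K * E) = A + d0 + K * (E - B).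
Proof. ring. Qed.

Lemma keyG : exists a g : C, forall k,
  ev (phiP true) (D (Gb C k)) = z ^ k * (a + k%:~R * g).
Proof.
exists (ev hA (D (Lb C 0)) + dd D 0), ((D (Lb C 1))@_(inl 1) - ev hB (D (Lb C 0))) => k.
by rewrite evG (ddE hl hb k) alg5.
Qed.

End Ev.



Definition idxi (a : sv_idx) : int := match a with inl j => j | inr j => j end.

Lemma idx_eq (a b : sv_idx) : idx_parity a = idx_parity b -> idxi a = idxi b -> a = b.
Proof. by case: a; case: b => //= x y _ ->. Qed.

Section Z.
Variable C : numClosedFieldType.

Lemma phiPE (z : C) par a :
  phiP z par a = if idx_parity a == par then z ^ idxi a else 0.
Proof. by case: a; case: par. Qed.

Lemma ev_zero par (v : SV C) :
  (forall z : C, z != 0 -> ev (phiP z par) v = 0) ->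
  forall i, v@_(if par then inr i else inl i) = 0.
Proof.
move=> H i.
have pa0 : idx_parity (if par then inr i else inl i) = par by destruct par.
have ia0 : idxi (if par then inr i else inl i) = i by destruct par.
move: pa0 ia0; set a0 := (if par then inr i else inl i) => pa0 ia0.
have [a0in|a0nin] := boolP (a0 \in msupp v); last exact: mcoeff_outdom.
pose N := \max_(a <- msupp v) absz (idxi a).
have HN : forall a, a \in msupp v -> 0 <= idxi a + N%:Z.
  move=> a ain.
  have : (absz (idxi a) <= N)%N.
    by apply: (@leq_bigmax_seq _ _ xpredT (fun a => absz (idxi a))).
  move=> h; lia.
pose Q (a : sv_idx) : {poly C} :=
  if idx_parity a == par then 'X^(absz (idxi a + N%:Z)) else 0.
pose P := \sum_(a <- msupp v) v@_a *: Q a.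
have Pz : forall z : C, z != 0 -> P.[z] = 0.
  move=> z z0; rewrite horner_sum.
  transitivity (z ^+ N * ev (phiP z par) v); last by rewrite H // mulr0.
  rewrite /ev big_distrr /=; apply: eq_big_seq => a ain.
  rewrite hornerZ phiPE /Q; case: eqP => _; last by rewrite horner0 !mulr0.
  rewrite hornerXn exprnP gez0_abs ?HN // expfzDr // -exprnP.
  by rewrite [_ * z ^+ N]mulrC mulrCA.
have P0 : P = 0.
  apply: (@roots_geq_poly_eq0 _ _ [seq (n.+1)%:R | n <- iota 0 (size P)]).
  - by apply/allP => x /mapP [n _ ->]; rewrite /root Pz // pnatr_eq0.
  - by rewrite map_inj_uniq ?iota_uniq // => x y /eqP; rewrite eqr_nat eqSS => /eqP.
  - by rewrite size_map size_iota.
have := congr1 (fun p : {poly C} => p`_(absz (idxi a0 + N%:Z))) P0.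
rewrite coef0 /P coef_sum (@sum_single _ _ v a0) //.
  by rewrite coefZ /Q pa0 eqxx coefXn eqxx mulr1.
move=> a ain ne; rewrite coefZ /Q; case: eqP => hp; last by rewrite coef0 mulr0.
rewrite coefXn; case: eqP => e; last by rewrite mulr0.
have h1 := HN a ain; have h2 := HN a0 a0in.
have ei : idxi a0 = idxi a by lia.
by move: ne; rewrite (idx_eq (etrans pa0 (esym hp)) ei) eqxx.
Qed.

End Z.

Lemma alg_final (C : numClosedFieldType) (z Z a g M : C) : z != 0 ->
  Z * (a + M * g) + ((M - 1) * Z * (1 * (a + 0 * g)) +
    - (M * (Z * z^-1)) * (z * (a + 1 * g))) = 0.
Proof. move=> h; by field. Qed.

Lemma lin3 (C : numClosedFieldType) (D : SV C -> SV C)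
  (hl : forall a x y, D (a *: x + y) = a *: D x + D y) x y u (s r : C) :
  D (x + (s *: y + r *: u)) = D x + (s *: D y + r *: D u).
Proof. by rewrite (DD hl) (DD hl) (DZ hl) (DZ hl). Qed.

Lemma ev3 (C : numClosedFieldType) phi (x y u : SV C) (s r : C) :
  ev phi (x + (s *: y + r *: u)) = ev phi x + (s * ev phi y + r * ev phi u).
Proof. by rewrite !evD !evZ. Qed.

Theorem lemma3p6 (C : numClosedFieldType) (Delta : SV C -> SV C) :
  local_derivation Delta ->
  Delta (Gb C 0) = 0 -> Delta (Gb C 1) = 0 ->
  forall m : int, Delta (Gb C m) = 0.
Proof.
move=> [lD loc] h0 h1 m.
have Hev : forall par (z : C), z != 0 -> ev (phiP z par) (Delta (Gb C m)) = 0.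
  move=> par z z0.
  pose s := (m%:~R - 1) * z ^ m.
  pose r := - (m%:~R * z ^ (m - 1)).
  have eX : Delta (Gb C m) = Delta (Gb C m + (s *: Gb C 0 + r *: Gb C 1)).
    by rewrite (lin3 lD) h0 h1 !scaler0 !addr0.
  have [D [hD eD]] := loc (Gb C m + (s *: Gb C 0 + r *: Gb C 1)).
  rewrite eX eD.
  have [hl hb] := der_props hD.
  rewrite (lin3 hl) ev3.
  have zm1 : z ^ (m - 1) = z ^ m * z^-1 by rewrite expfzDr // exprN1.
  rewrite /s /r zm1.
  case: par.
    have [a [g Hk]] := keyG z0 hl hb.
    rewrite !Hk expr0z expr1z intr0C intr1C.
    exact: alg_final.
  have [a [g Hk]] := keyL z0 hl hb.
  rewrite !Hk expr0z expr1z intr0C intr1C.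
  exact: alg_final.
apply/malgP => -[i|i]; rewrite mcoeff0.
  exact: (@ev_zero C false (Delta (Gb C m)) (Hev false) i).
exact: (@ev_zero C true (Delta (Gb C m)) (Hev true) i).
Qed.
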